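(* Let $\Gamma\subsetneqq\mathbb{R}^n$ be an open convex cone with vertex at the origin such that $\{\lambda:\lambda_i>0\ \forall i\}\subset\Gamma\subset\{\lambda:\sum_i\lambda_i>0\}$, and let $f$ be a smooth symmetric function on $\Gamma$ with $\frac{\partial f}{\partial\lambda_i}>0$ in $\Gamma$ for all $i$ and $\limsup_{\lambda\to\lambda_0}f(\lambda)<1$ for every $\lambda_0\in\partial\Gamma$. Let $A=\mathrm{diag}(a_1,\dots,a_n)\in\mathcal{A}$ with $0<a_1\leq\cdots\leq a_n$. Let $g:[1,\infty)\to\mathbb{R}$ be the unique smooth function with $(g(w),a_2w,\dots,a_nw)\in\Gamma$ and $f(g(w),a_2w,\dots,a_nw)=1$ for $w\geq1$. For $\delta\geq0$ and $c_2>1$ let $w_{c_2,\delta}(s)$ be the solution on $[1,+\infty)$ of $$\frac{dw}{ds}=\frac{g(w)-a_1w}{(2a_n+\delta)s},\qquad w(1)=c_2.$$ Then for every $s\in[1,+\infty)$, $0<\frac{\partial w_{c_2,\delta}}{\partial c_2}(s)\leq1$ and $\lim_{c_2\to+\infty}w_{c_2,\delta}(s)=+\infty$.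
   Context: $S^+(n)$ is the set of real symmetric positive definite $n\times n$ matrices; for $A\in S^+(n)$, $a=\lambda(A)$ denotes its eigenvalues, $\hat a=\max_ia_i$, $\hat f_\lambda(a)=\max_i\frac{\partial f}{\partial\lambda_i}(a)$, and $\mathcal{A}:=\{A\in S^+(n): f(a)=1,\ \frac{\nabla f(a)\cdot a}{2\hat a\hat f_\lambda(a)}>1\}$. *)

(* Defs.v *)
From HB Require Import structures.
From mathcomp Require Import all_boot all_order all_algebra.
From mathcomp Require Import all_classical all_reals all_analysis.
From mathcomp Require Import fingroup perm.
Set Implicit Arguments. Unset Strict Implicit. Unset Printing Implicit Defensive.
Import Order.TTheory GRing.Theory Num.Theory.
Import numFieldNormedType.Exports.
Local Open Scope classical_set_scope.
Local Open Scope ring_scope.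

Section Defs.
Variables (R : realType) (n : nat).
Notation V := 'rV[R]_n.

Definition basis_vec (i : 'I_n) : V := delta_mx 0 i.

Definition pderiv (f : V -> R) (i : 'I_n) (x : V) : R := 'D_(basis_vec i) f x.

Fixpoint iter_deriv (vs : seq V) (f : V -> R) : V -> R :=
  match vs with
  | [::] => f
  | v :: vs' => fun x => 'D_v (iter_deriv vs' f) x
  end.

Definition smooth_on (U : set V) (f : V -> R) : Prop :=
  forall (vs : seq V), (forall x, U x -> forall v, derivable (iter_deriv vs f) x v)
    /\ {in U, continuous (iter_deriv vs f)}.

Definition open_convex_cone (G : set V) : Prop :=
  [/\ open G,
      (forall x t, G x -> 0 < t -> G (t *: x)) &
      (forall x y t, G x -> G y -> 0 <= t <= 1 -> G ((1 - t) *: x + t *: y))].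

Definition permv (s : {perm 'I_n}) (x : V) : V := \row_i x 0 (s i).

Definition symmetric_on (G : set V) (f : V -> R) : Prop :=
  forall (s : {perm 'I_n}) x, G x -> G (permv s x) /\ f (permv s x) = f x.

Definition bdry (G : set V) : set V := closure G `\` interior G.

(* limsup_{x -> x0, x in G} f x < c, written out *)
Definition limsup_lt (G : set V) (f : V -> R) (x0 : V) (c : R) : Prop :=
  exists2 c' : R, c' < c & \forall x \near x0, G x -> f x <= c'.

Definition vmax (x : V) (i0 : 'I_n) : R := \big[Num.max/x 0 i0]_(i < n) x 0 i.
Definition fhat_lambda (f : V -> R) (x : V) (i0 : 'I_n) : R :=
  \big[Num.max/pderiv f i0 x]_(i < n) pderiv f i x.

Definition grad_dot (f : V -> R) (x : V) : R := \sum_(i < n) pderiv f i x * x 0 i.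

Definition spd (A : 'M[R]_n) : Prop :=
  A^T = A /\ forall u : 'cV[R]_n, u != 0 -> 0 < (u^T *m A *m u) 0 0.

(* a is (an ordering of) the eigenvalues of A, with multiplicity *)
Definition eigvals (A : 'M[R]_n) (a : V) : Prop :=
  char_poly A = \prod_(i < n) ('X - (a 0 i)%:P).
End Defs.

(* the set calA (needs n >= 1 to speak of max) *)
Definition calA (R : realType) (n : nat) (f : 'rV[R]_n.+1 -> R) (A : 'M[R]_n.+1) : Prop :=
  spd A /\ exists2 a : 'rV[R]_n.+1, eigvals A a &
    f a = 1 /\ 1 < grad_dot f a / (2 * vmax a ord0 * fhat_lambda f a ord0).

(* Main.v *)
Require Import Defs.
From HB Require Import structures.
From mathcomp Require Import all_boot all_order all_algebra.
From mathcomp Require Import all_classical all_reals all_analysis.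
Import Order.TTheory GRing.Theory Num.Theory.
Import numFieldNormedType.Exports.
Local Open Scope classical_set_scope.
Local Open Scope ring_scope.

From mathcomp Require Import fingroup perm.
From mathcomp.algebra_tactics Require Import ring lra.
Set Implicit Arguments. Unset Strict Implicit. Unset Printing Implicit Defensive.

Lemma prod_map_enum (R : realType) m (F : 'I_m -> R) :
  \prod_(x <- [seq F i | i <- enum 'I_m]) ('X - x%:P) = \prod_(i < m) ('X - (F i)%:P).
Proof. by rewrite big_map enumT unlock. Qed.

Lemma eig_perm (R : realType) m (a a' : 'rV[R]_m) :
  eigvals (diag_mx a) a' -> exists s : {perm 'I_m}, a' = permv s a.
Proof.
rewrite /eigvals char_poly_trig ?diag_mx_is_trig // => E.
have E2 : \prod_(x <- [seq a' 0 i | i <- enum 'I_m]) ('X - x%:P) =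
          \prod_(x <- [seq a 0 i | i <- enum 'I_m]) ('X - x%:P).
  rewrite !prod_map_enum -E.
  by apply: eq_bigr => i _; rewrite !mxE eqxx mulr1n.
have /prod_XsubC_eq P := E2.
have P' : perm_eq [seq a' 0 i | i <- enum 'I_m] [tuple a 0 i | i < m].
  by [].
case/tuple_permP: P' => p Hp.
exists p; apply/rowP => i; rewrite mxE.
have := congr1 (fun s => nth 0 s i) Hp.
rewrite (nth_map i) ?size_enum_ord ?ltn_ord // nth_ord_enum /= => ->.
by rewrite (nth_map i) ?size_enum_ord ?ltn_ord // nth_ord_enum tnth_mktuple.
Qed.
Section Vec.
Variables (R : realType) (m : nat) (G : set 'rV[R]_m) (f : 'rV[R]_m -> R).
Hypothesis hG : open_convex_cone G.
Hypothesis hpos : forall x : 'rV[R]_m, (forall i, 0 < x 0 i) -> G x.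

Lemma up_closed (x p : 'rV[R]_m) : G x -> (forall i, 0 <= p 0 i) -> G (x + p).
Proof.
case: hG => oG cone conv Gx p0.
pose one : 'rV[R]_m := const_mx 1.
have H : {for 0, continuous (fun e : R => x - e *: one)}.
  apply: continuousB; [exact: cst_continuous | exact: scalel_continuous].
have : nbhs ((fun e : R => x - e *: one) 0) G.
  by rewrite scale0r subr0; apply: oG.
move=> /H /nbhs_ballP [e e0 He].
have Gy : G (x - (e / 2) *: one).
  apply: (He (e / 2)); rewrite /ball /= sub0r normrN gtr0_norm ?divr_gt0 //.
  by rewrite ltr_pdivrMr // ltr_pMr // ltr1n.
have -> : x + p = (1 - 2^-1) *: (2 *: (x - (e / 2) *: one)) +
   2^-1 *: (2 *: (p + (e / 2) *: one)).
  by apply/rowP => i; rewrite !mxE; field.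
apply: conv.
- by apply: cone => //; rewrite ltr0n.
- apply: cone; last by rewrite ltr0n.
  by apply: hpos => i; rewrite !mxE; apply: ltr_wpDl => //; rewrite mulr1 divr_gt0 // ltr0n.
- by rewrite invr_ge0 ler0n /= invf_le1 // ?ler1n // ltr0n.
Qed.

Lemma line_derive (x v : 'rV[R]_m) (t : R) :
  derivable f (t *: v + x) v ->
  is_derive t 1 (fun s => f (s *: v + x)) ('D_v f (t *: v + x)).
Proof.
have E : (fun h : R => h^-1 *: (((fun s => f (s *: v + x)) \o shift t) (h *: 1) -
                                   (fun s => f (s *: v + x)) t)) =
         (fun h : R => h^-1 *: ((f \o shift (t *: v + x)) (h *: v) - f (t *: v + x))).
  apply/funext => h /=; congr (_ *: (f _ - _)).
  by rewrite scalerDl addrA [h%:A]mulr1.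
move=> D; split; first by rewrite /derivable E.
by rewrite /derive E.
Qed.

Hypothesis hsm : smooth_on G f.
Hypothesis hpd : forall x i, G x -> 0 < pderiv f i x.

Lemma derivable_G (x v : 'rV[R]_m) : G x -> derivable f x v.
Proof. by move=> Gx; apply: (hsm [::]).1. Qed.

Lemma coord_lt (x : 'rV[R]_m) (i : 'I_m) (d : R) :
  G x -> 0 < d -> f x < f (d *: basis_vec R i + x).
Proof.
move=> Gx d0.
have Gs (s : R) : 0 <= s -> G (s *: basis_vec R i + x).
  move=> s0; rewrite addrC; apply: up_closed => // j.
  by rewrite !mxE mulr_ge0 // ler0n.
pose phi s := f (s *: basis_vec R i + x).
have Dphi (s : R) : 0 <= s -> is_derive s 1 phi (pderiv f i (s *: basis_vec R i + x)).
  by move=> s0; apply: line_derive; apply: derivable_G; exact: Gs.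
have H := @gtr0_derive1_lt_cc _ phi 0 d.
have -> : f x = phi 0 by rewrite /phi scale0r add0r.
apply: H; last by [].
- move=> s; rewrite in_itv /= => /andP [s0 _].
  by have [] := Dphi s (ltW s0).
- move=> s; rewrite in_itv /= => /andP [s0 _].
  rewrite derive1E; have [_ ->] := Dphi s (ltW s0).
  by apply: hpd; apply: Gs; apply: ltW.
- apply: derivable_within_continuous => s; rewrite in_itv /= => /andP [s0 _].
  by have [] := Dphi s s0.
- by rewrite in_itv /= lexx ltW.
- by rewrite in_itv /= lexx ltW.
Qed.

Lemma coord_le (x : 'rV[R]_m) (i : 'I_m) (d : R) :
  G x -> 0 <= d -> f x <= f (d *: basis_vec R i + x).
Proof.
move=> Gx; rewrite le_eqVlt => /predU1P [<-|d0].
  by rewrite scale0r add0r.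
exact/ltW/coord_lt.
Qed.

Lemma stair (x p : 'rV[R]_m) : G x -> (forall i, 0 <= p 0 i) -> f x <= f (x + p).
Proof.
move=> Gx p0; rewrite [p]row_sum_delta.
suff : G (x + \sum_(j <- index_enum 'I_m) p 0 j *: delta_mx 0 j) /\
       f x <= f (x + \sum_(j <- index_enum 'I_m) p 0 j *: delta_mx 0 j) by case.
elim: (index_enum _) => [|j s [IH1 IH2]]; first by rewrite big_nil addr0.
rewrite big_cons addrCA; split.
  rewrite addrC; apply: up_closed => // k.
  by rewrite !mxE mulr_ge0 // ler0n.
apply: (le_trans IH2); exact: coord_le.
Qed.
End Vec.
Lemma oo_cc (R : realType) (x y z : R) : x \in `]y, z[ -> y <= x <= z.
Proof. by rewrite in_itv /= => /andP [h1 h2]; rewrite !ltW. Qed.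
Lemma cc_cc (R : realType) (x y z : R) : x \in `[y, z] -> y <= x <= z.
Proof. by rewrite in_itv /=. Qed.

Section Gpart.
Variables (R : realType) (n : nat) (G : set 'rV[R]_n.+1) (f : 'rV[R]_n.+1 -> R)
  (a : 'rV[R]_n.+1) (g : R -> R).
Hypothesis hG : open_convex_cone G.
Hypothesis hpos : forall x : 'rV[R]_n.+1, (forall i, 0 < x 0 i) -> G x.
Hypothesis hsum : forall x : 'rV[R]_n.+1, G x -> 0 < \sum_i x 0 i.
Hypothesis hsm : smooth_on G f.
Hypothesis hpd : forall x i, G x -> 0 < pderiv f i x.
Hypothesis fa1 : f a = 1.
Hypothesis a0 : 0 < a 0 ord0.
Hypothesis amono : forall i j : 'I_n.+1, (i <= j)%N -> a 0 i <= a 0 j.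
Hypothesis hg : forall w : R, 1 <= w ->
     G (\row_i (if i == ord0 then g w else a 0 i * w)) /\
     f (\row_i (if i == ord0 then g w else a 0 i * w)) = 1.

Definition Pt (t w : R) : 'rV[R]_n.+1 := \row_i (if i == ord0 then t else a 0 i * w).
Definition vv : 'rV[R]_n.+1 := \row_i (if i == ord0 then 0 else a 0 i).
Local Notation e1 := (basis_vec R (@ord0 n)).

Lemma hgP w : 1 <= w -> G (Pt (g w) w) /\ f (Pt (g w) w) = 1.
Proof. exact: hg. Qed.

Lemma apos i : 0 < a 0 i.
Proof. exact: (lt_le_trans a0 (@amono ord0 i (leq0n i))). Qed.

Lemma Ga : G a. Proof. apply: hpos; exact: apos. Qed.

Lemma Pt_t t t' w : Pt t' w = (t' - t) *: e1 + Pt t w.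
Proof.
apply/rowP => i; rewrite !mxE eqxx /=.
by case: (i == ord0) => /=; ring.
Qed.

Lemma Pt_w t w w' : Pt t w' = (w' - w) *: vv + Pt t w.
Proof.
apply/rowP => i; rewrite !mxE.
by case: (i == ord0) => /=; ring.
Qed.

Lemma Pt_a : Pt (a 0 ord0) 1 = a.
Proof.
apply/rowP => i; rewrite !mxE.
by case: eqP => [->|_]; rewrite ?mulr1.
Qed.

Lemma vv_ge0 i : 0 <= vv 0 i.
Proof. by rewrite !mxE; case: (i == ord0) => //; apply/ltW/apos. Qed.

Lemma E1 t t' w : G (Pt t w) -> t < t' -> G (Pt t' w) /\ f (Pt t w) < f (Pt t' w).
Proof.
move=> GP tt'; rewrite (Pt_t t t' w); split.
  rewrite addrC; apply: (up_closed hG hpos GP) => j.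
  by rewrite !mxE mulr_ge0 ?ler0n // subr_ge0 ltW.
by apply: (coord_lt hG hpos hsm hpd ord0 GP); rewrite subr_gt0.
Qed.

Lemma g1 : g 1 = a 0 ord0.
Proof.
have [G1 f1] := hgP (lexx 1).
have Ga' : G (Pt (a 0 ord0) 1) by rewrite Pt_a; exact: Ga.
case: (ltgtP (g 1) (a 0 ord0)) => // H.
  by have [_] := E1 G1 H; rewrite Pt_a fa1 f1 ltxx.
by have [_] := E1 Ga' H; rewrite Pt_a fa1 f1 ltxx.
Qed.

Lemma g_noninc w w' : 1 <= w -> w <= w' -> g w' <= g w.
Proof.
move=> w1 ww'; rewrite leNgt; apply/negP => H.
have [Gw fw] := hgP w1; have [Gw' fw'] := hgP (le_trans w1 ww').
have [G2 lt2] := E1 Gw H.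
have H2 : f (Pt (g w') w) <= f (Pt (g w') w').
  rewrite [X in _ <= f X](Pt_w (g w') w w') addrC; apply: (stair hG hpos hsm hpd G2) => i.
  by rewrite mxE mulr_ge0 ?subr_ge0 // vv_ge0.
by have := lt_le_trans lt2 H2; rewrite fw fw' ltxx.
Qed.

Lemma sum_bound w : 1 <= w -> - (\sum_i a 0 i) * w < g w - a 0 ord0 * w.
Proof.
move=> w1; have [Gw _] := hgP w1; have := hsum Gw.
rewrite !big_ord_recl /= !mxE eqxx /=.
under eq_bigr do rewrite !mxE eq_sym (negbTE (neq_lift _ _)).
rewrite -mulr_suml; set S := \sum_(i < n) _.
move=> H; nra.
Qed.

Lemma lip1 : exists L0 eta : R, 0 < eta /\
  forall w, 1 <= w <= 1 + eta -> a 0 ord0 - L0 * (w - 1) <= g w.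
Proof.
have Ga := Ga.
set D1 := pderiv f ord0 a.
have D1p : 0 < D1 by apply: hpd.
set Dv := 'D_vv f a.
set M := `|Dv| + 1.
have M0 : 0 < M by rewrite /M ltr_pwDr.
have c1 : {for a, continuous (fun y => pderiv f ord0 y)}.
  exact: (hsm [:: e1]).2 a (mem_set Ga).
have cv : {for a, continuous (fun y => 'D_vv f y)}.
  exact: (hsm [:: vv]).2 a (mem_set Ga).
have Q : \forall y \near a, G y /\ D1/2 <= pderiv f ord0 y /\ 'D_vv f y <= M.
  near=> y; split; [|split].
  - near: y; case: hG => oG _ _; exact: oG.
  - near: y; move/cvgrPdist_lt: c1 => /(_ (D1/2)) H.
    have := H (divr_gt0 D1p (ltr0n _ 2)); apply: filterS => y Hy.
    have := ler_distlDr (ltW Hy) ; rewrite -/D1 => H2.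
    have : D1 - D1 / 2 <= pderiv f ord0 y.
      by move: Hy; rewrite ltr_distlC => /andP [/ltW ? _].
    by have -> : D1 - D1 / 2 = D1 / 2 by field.
  - near: y; move/cvgrPdist_lt: cv => /(_ 1 ltr01); apply: filterS => y Hy.
    move: Hy; rewrite ltr_distlC => /andP [_ /ltW H].
    apply: (le_trans H); rewrite /M lerD2r; exact: ler_norm.
case/nbhs_ballP: Q => rho rho0 Hrho.
set L0 := 2 * (M + 1) / D1.
have L0p : 0 < L0 by rewrite /L0 divr_gt0 // mulr_gt0 // addr_gt0.
set K := L0 * `|e1| + `|vv|.
have K0 : 0 <= K by rewrite addr_ge0 // mulr_ge0 // ltW.
set eta := rho / (2 * (K + 1)).
have eta0 : 0 < eta by rewrite divr_gt0 // mulr_gt0 // ltr_pwDr.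
have etaE : eta * (2 * (K + 1)) = rho by rewrite /eta; field; lra.
exists L0, eta; split => // w /andP [w1 weta].
case: (eqVneq w 1) => [->|wne1]; first by rewrite g1 subrr mulr0 subr0.
have w1' : 1 < w by rewrite lt_neqAle eq_sym wne1 w1.
set eps := w - 1.
have eps0 : 0 < eps by rewrite subr_gt0.
have epseta : eps <= eta by rewrite /eps lerBlDl.
have inB (th r : R) : `|th| <= L0 * eps -> 0 <= r <= eps ->
    G (th *: e1 + (r *: vv + a)) /\ D1/2 <= pderiv f ord0 (th *: e1 + (r *: vv + a))
    /\ 'D_vv f (th *: e1 + (r *: vv + a)) <= M.
  move=> hth /andP [r0 reps]; apply: Hrho.
  rewrite -ball_normE /= addrA opprD addrCA subrr addr0 normrN.
  apply: (le_lt_trans (ler_normD _ _)); rewrite !normrZ (ger0_norm r0).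
  have h1 : `|th| * `|e1| <= L0 * eps * `|e1| by rewrite ler_wpM2r.
  have h2 : r * `|vv| <= eps * `|vv| by rewrite ler_wpM2r.
  have h3 : eps * K <= eta * K by rewrite ler_wpM2r.
  have : eta * K < rho by rewrite -etaE ltr_pM2l //; lra.
  move=> h4; rewrite /K in h3 h4; lra.
pose psi r := f (r *: vv + a).
have Dpsi r : 0 <= r <= eps -> is_derive r 1 psi ('D_vv f (r *: vv + a)).
  move=> hr; apply: line_derive; apply: (derivable_G hsm).
  have h0 : `|0:R| <= L0 * eps by rewrite normr0 mulr_ge0 // ltW.
  by case: (inB 0 r h0 hr); rewrite scale0r add0r.
have cpsi : {within `[0, eps], continuous psi}.
  apply: derivable_within_continuous => x /cc_cc hx; by case: (Dpsi x hx).
have [xi xiI EA] := @MVT R psi (fun r => 'D_vv f (r *: vv + a)) 0 eps eps0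
   (fun x hx => Dpsi x (oo_cc hx)) cpsi.
have h00 : `|0:R| <= L0 * eps by rewrite normr0 mulr_ge0 // ltW.
have [_ [_ xiM]] := inB 0 xi h00 (oo_cc xiI).
rewrite scale0r add0r in xiM.
have StepA : psi eps <= 1 + M * eps.
  by move: EA; rewrite subr0 /psi scale0r add0r fa1 => EA; nra.
pose b := eps *: vv + a.
pose phi th := f (th *: e1 + b).
have Dphi th : - (L0 * eps) <= th <= 0 -> is_derive th 1 phi (pderiv f ord0 (th *: e1 + b)).
  move=> /andP [h1 h2]; apply: line_derive; apply: (derivable_G hsm).
  have h0 : `|th| <= L0 * eps by rewrite ler0_norm // lerNl.
  have heps' : 0 <= eps <= eps by rewrite lexx ltW.
  by case: (inB th eps h0 heps').
have Le0 : - (L0 * eps) < 0 by rewrite oppr_lt0 mulr_gt0.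
have cphi : {within `[- (L0 * eps), 0], continuous phi}.
  apply: derivable_within_continuous => x /cc_cc hx; by case: (Dphi x hx).
have [xi' xiI' EB] := @MVT R phi (fun th => pderiv f ord0 (th *: e1 + b)) _ 0 Le0
   (fun x hx => Dphi x (oo_cc hx)) cphi.
have hxi' : `|xi'| <= L0 * eps.
  by case/oo_cc/andP: xiI' => h1 h2; rewrite ler0_norm // lerNl.
have heps : 0 <= eps <= eps by rewrite lexx ltW.
have [_ [xiD _]] := inB xi' eps hxi' heps.
have StepB : phi (- (L0 * eps)) <= phi 0 - (M + 1) * eps.
  have E : D1 / 2 * L0 = M + 1 by rewrite /L0; field; lra.
  move: EB; rewrite sub0r opprK => EB.
  have : D1 / 2 * (L0 * eps) <= pderiv f ord0 (xi' *: e1 + b) * (L0 * eps).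
    by rewrite ler_wpM2r // mulr_ge0 // ltW.
  rewrite mulrA E; lra.
have phi0 : phi 0 = psi eps by rewrite /phi scale0r add0r.
have Hlt : f (Pt (a 0 ord0 - L0 * eps) w) < 1.
  have -> : Pt (a 0 ord0 - L0 * eps) w = (- (L0 * eps)) *: e1 + b.
    apply/rowP => i; rewrite /b -[in RHS]Pt_a !mxE eqxx /= /eps.
    by case: (i == ord0) => /=; ring.
  rewrite -/(phi _); lra.
rewrite leNgt; apply/negP => H.
have [Gw fw] := hgP w1.
have [_ lt] := E1 Gw H.
by have := lt_trans lt Hlt; rewrite fw ltxx.
Unshelve. all: by end_near.
Qed.

Lemma Ksum_pos : 0 < \sum_i a 0 i.
Proof.
have h : 0 <= \sum_(i < n) a 0 (lift ord0 i) by apply: sumr_ge0 => i _; exact/ltW/apos.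
by rewrite big_ord_recl; have := a0; lra.
Qed.

Lemma Hlin : exists L : R, 0 < L /\
  forall w, 1 <= w -> - L * (w - 1) <= g w - a 0 ord0 * w.
Proof.
have [L0 [eta [eta0 HL]]] := lip1.
set K := \sum_i a 0 i.
have K0 : 0 < K := Ksum_pos.
set Kq := K * (1 + eta) / eta.
have Kq0 : 0 <= Kq by rewrite /Kq divr_ge0 // ?mulr_ge0 // ltW // addr_gt0.
exists (`|L0| + a 0 ord0 + Kq); split.
  by have := normr_ge0 L0; have := a0; lra.
move=> w w1; case: (lerP w (1 + eta)) => hw.
  have := HL w; rewrite w1 hw => /(_ isT) H.
  have h1 : L0 <= `|L0| := ler_norm L0.
  have h2 : 0 <= w - 1 by rewrite subr_ge0.
  nra.
have := sum_bound w1; rewrite -/K => H.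
have E : eta * (Kq * (w - 1) - K * w) = K * (w - 1 - eta) by rewrite /Kq; field; lra.
have h3 : 0 <= Kq * (w - 1) - K * w.
  have hw' : 0 <= w - 1 - eta by lra.
  have : 0 <= eta * (Kq * (w - 1) - K * w) by rewrite E mulr_ge0 // ltW.
  by rewrite pmulr_rge0.
have h2 : 0 <= w - 1 by rewrite subr_ge0.
have h4 : 0 <= (`|L0| + a 0 ord0) * (w - 1).
  by apply: mulr_ge0 => //; have := a0; have := normr_ge0 L0; lra.
nra.
Qed.

Lemma Hdec x y : 1 <= x -> x < y -> g y - a 0 ord0 * y < g x - a 0 ord0 * x.
Proof.
move=> x1 xy; have := g_noninc x1 (ltW xy).
have : a 0 ord0 * x < a 0 ord0 * y by rewrite ltr_pM2l.
lra.
Qed.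
End Gpart.

Lemma oo_cc' (R : realType) (x y z : R) : x \in `]y, z[ -> y < x /\ x < z.
Proof. by rewrite in_itv /= => /andP. Qed.

Section ODE.
Variables (R : realType) (H : R -> R) (C L K : R).
Hypothesis C0 : 0 < C.
Hypothesis L0 : 0 < L.
Hypothesis K0 : 0 < K.
Hypothesis H1 : H 1 = 0.
Hypothesis Hdec : forall x y, 1 <= x -> x < y -> H y < H x.
Hypothesis Hlin : forall w, 1 <= w -> - L * (w - 1) <= H w.
Hypothesis Hlow : forall w, 1 <= w -> - K * w <= H w.

Definition sol (c : R) (y : R -> R) :=
  [/\ y 1 = c, {within `[1, +oo[, continuous y} &
      forall s : R, 1 < s -> is_derive s 1 y (H (y s) / (C * s))].

Lemma Hneg x : 1 < x -> H x < 0.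
Proof. by move=> x1; rewrite -H1; apply: Hdec. Qed.

Lemma Hle x y : 1 <= x -> x <= y -> H y <= H x.
Proof.
move=> x1; rewrite le_eqVlt => /predU1P [->|xy]; first by [].
exact/ltW/Hdec.
Qed.

Lemma cont_sub (y : R -> R) (a b : R) : 1 <= a ->
  {within `[1, +oo[, continuous y} -> {within `[a, b], continuous y}.
Proof.
move=> a1; apply: continuous_subspaceW => x /=; rewrite !in_itv /= => /andP [h _].
by rewrite andbT (le_trans a1 h).
Qed.

Lemma cont_zexp (y : R -> R) (A : set R) (k d : R) :
  {within A, continuous y} ->
  {within A, continuous (fun s => (y s - d) * expR (k * s))}.
Proof.
move=> cy x; apply: (@continuousM R (subspace A) (fun s => y s - d) (fun s => expR (k * s))).
  apply: (@continuousB R R (subspace A) y (cst d)); [exact: cy | exact: cst_continuous].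
move: x; apply: (@continuous_subspaceT _ _ A (fun s => expR (k * s))) => t.
apply: (@continuous_comp _ _ _ (fun s => k * s) expR); last exact: continuous_expR.
apply: (@continuousM _ _ (cst k) id); [exact: cst_continuous | exact: cvg_id].
Qed.

Lemma deriv_zexp (y : R -> R) (x k d dy : R) : is_derive x 1 y dy ->
  is_derive x 1 (fun s => (y s - d) * expR (k * s)) (expR (k * x) * (dy + k * (y x - d))).
Proof.
move=> Dy.
have d1 : is_derive x 1 (fun s => y s - d) dy.
  have := @is_deriveB _ _ _ y (cst d) x 1 dy 0 Dy (is_derive_cst _ _ _).
  by rewrite subr0.
have dk : is_derive x 1 (fun s : R => k * s) k.
  have := @is_deriveZ _ _ _ id k x 1 1 (is_derive_id _ _).
  by rewrite /GRing.scale /= mulr1.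
have d2 : is_derive x 1 (fun s => expR (k * s)) (expR (k * x) * k).
  exact: (@is_derive1_comp _ expR (fun s => k * s) x (expR (k * x)) k (is_derive_expR _) dk).
have := is_deriveM d1 d2.
move=> [D E]; split => //.
by rewrite E /GRing.scale /=; ring.
Qed.

Lemma within_pos (y : R -> R) (t0 : R) : 1 <= t0 ->
  {within `[1, +oo[, continuous y} -> 1 < y t0 ->
  exists2 d : R, 0 < d & forall r, 1 <= r -> `|t0 - r| < d -> 1 < y r.
Proof.
move=> t01 cy yt0.
have At0 : `[1, +oo[%classic t0 by rewrite /= in_itv /= t01.
have := (subspace_continuousP _ _).1 cy t0 At0.
move/cvgrPdist_lt => /(_ (y t0 - 1)); rewrite subr_gt0 => /(_ yt0).
rewrite near_withinE => /nbhs_ballP [d d0 Hd]; exists d => // r r1 hr.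
have Ar : `[1, +oo[%classic r by rewrite /= in_itv /= r1.
have := Hd r hr Ar; rewrite /from_subspace ltr_distlC => /andP [h _]; lra.
Qed.

Lemma above1 (c : R) (y : R -> R) : 1 < c -> sol c y -> forall s, 1 <= s -> 1 < y s.
Proof.
move=> c1 [y1 cy dy] s1 hs1.
rewrite ltNge; apply/negP => ys1.
set k := L / C.
have s1gt : 1 < s1.
  rewrite lt_neqAle hs1 andbT; apply/eqP => E; move: ys1; rewrite -E y1 leNgt c1.
  by [].
pose B := [set t | 1 <= t <= s1 /\ forall r, 1 <= r <= t -> 1 < y r].
have B1 : B 1.
  split; first by rewrite lexx hs1.
  move=> r /andP [h1 h2]; have -> : r = 1 by apply/eqP; rewrite eq_le h1 h2.
  by rewrite y1.
have ubB : ubound B s1 by move=> t [/andP [_ ?] _].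
have hB : has_sup B by split; [exists 1 | exists s1].
set t0 := sup B.
have t01 : 1 <= t0 by apply: sup_upper_bound.
have t0s1 : t0 <= s1 by apply: ge_sup => //; exists 1.
have CA r : 1 <= r -> r < t0 -> 1 < y r.
  move=> r1 rt0.
  have rp : 0 < t0 - r by rewrite subr_gt0.
  have [e [_ He] re] := sup_adherent rp hB.
  apply: He; rewrite r1 /=; rewrite -/t0 in re; lra.
have CB : 1 < y t0.
  case: (eqVneq t0 1) => [->|t0ne]; first by rewrite y1.
  have t0gt : 1 < t0 by rewrite lt_neqAle eq_sym t0ne t01.
  pose z s := (y s - 1) * expR (k * s).
  have Dz (x : R) : 1 < x -> is_derive x 1 z
      (expR (k * x) * (H (y x) / (C * x) + k * (y x - 1))).
    by move=> x1; apply: deriv_zexp; apply: dy.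
  have zmono := @ger0_derive1_ndecr R z 1 t0.
  have : z 1 <= z t0.
    apply: zmono; rewrite ?lexx ?ltW //.
    - by move=> x /oo_cc' [x1 _]; case: (Dz x x1).
    - move=> x hx; have [x1 xt0] := oo_cc' hx.
      rewrite derive1E; have [_ ->] := Dz x x1.
      apply: mulr_ge0; first exact: expR_ge0.
      have yx := CA x (ltW x1) xt0.
      have hl := Hlin (ltW yx).
      have E : H (y x) / (C * x) + k * (y x - 1) =
               (H (y x) + L * (y x - 1) * x) / (C * x).
        by rewrite /k; field; rewrite !gt_eqF //; lra.
      have Cx : 0 <= C * x by apply: ltW; apply: mulr_gt0 => //; apply: lt_trans x1.
      rewrite E; apply: divr_ge0 => //.
      have h5 : L * (y x - 1) * 1 <= L * (y x - 1) * x.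
        by rewrite ler_wpM2l ?ltW // mulr_gt0 // subr_gt0.
      lra.
    - exact/cont_zexp/cont_sub.
  rewrite /z y1 => hz.
  have : 0 < (y t0 - 1) * expR (k * t0).
    by apply: lt_le_trans hz; apply: mulr_gt0; [lra | exact: expR_gt0].
  by rewrite pmulr_lgt0 ?expR_gt0 // subr_gt0.
case: (ltgtP t0 s1) => [t0lt|t0gt|t0eq]; last 2 first.
- by move: t0gt; rewrite ltNge t0s1.
- by move: ys1; rewrite -t0eq leNgt CB.
have [d d0 Hd] := within_pos t01 cy CB.
set t' := Num.min (t0 + d / 2) s1.
have Bt' : B t'.
  split.
    have hd : 0 <= d / 2 by rewrite divr_ge0 // ltW.
    have h1 : 1 <= t' by rewrite /t' le_min; apply/andP; split; lra.
    have h2 : t' <= s1 by rewrite /t' ge_min lexx orbT.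
    by rewrite h1 h2.
  move=> r /andP [r1 rt'].
  case: (ltP r t0) => hr; first exact: CA.
  apply: Hd => //; have : r <= t0 + d / 2 by apply: (le_trans rt'); rewrite ge_min lexx.
  by rewrite ler0_norm ?subr_le0 //; lra.
have := sup_upper_bound hB Bt'; rewrite -/t0 /t'.
rewrite ge_min; case/orP => h.
  by move: h; rewrite leNgt ltrDl divr_gt0.
by move: h; rewrite leNgt t0lt.
Qed.

Lemma sol_nincr (c : R) (y : R -> R) : 1 < c -> sol c y ->
  forall s s', 1 <= s -> s <= s' -> y s' <= y s.
Proof.
move=> c1 hy; have [y1 cy dy] := hy.
apply: ler0_derive1_nincry => //.
- by move=> x; rewrite in_itv /= andbT => x1; case: (dy x x1).
- move=> x; rewrite in_itv /= andbT => x1; rewrite derive1E; have [_ ->] := dy x x1.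
  have yx := above1 c1 hy (ltW x1).
  have := Hneg yx => hn.
  by apply: ltW; rewrite pmulr_llt0 // invr_gt0 mulr_gt0 //; lra.
Qed.

Lemma sol_le (c : R) (y : R -> R) : 1 < c -> sol c y -> forall s, 1 <= s -> y s <= c.
Proof.
move=> c1 hy s s1; have [y1 _ _] := hy; rewrite -[X in _ <= X]y1.
exact: (sol_nincr c1 hy (lexx 1) s1).
Qed.

Lemma sol_decr (c : R) (y : R -> R) : 1 < c -> sol c y ->
  forall s s', 1 <= s -> s < s' -> y s' < y s.
Proof.
move=> c1 hy s s' s1 ss'; have [y1 cy dy] := hy.
have := @ltr0_derive1_lt_cc R y 1 s'.
have s'1 : 1 < s' by apply: (le_lt_trans s1).
apply => //.
- by move=> x /oo_cc' [x1 _]; case: (dy x x1).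
- move=> x /oo_cc' [x1 _]; rewrite derive1E; have [_ ->] := dy x x1.
  have yx := above1 c1 hy (ltW x1).
  have := Hneg yx => hn.
  by rewrite pmulr_llt0 // invr_gt0 mulr_gt0 //; lra.
- exact: cont_sub.
all: rewrite in_itv /=; apply/andP; split; lra.
Qed.

Lemma Hprod u v : 1 <= u -> 1 <= v -> (u - v) * (H u - H v) <= 0.
Proof.
move=> u1 v1; case: (lerP u v) => uv.
  have := Hle u1 uv => h; apply: mulr_le0_ge0; lra.
have := Hle v1 (ltW uv) => h; apply: mulr_ge0_le0; lra.
Qed.

Lemma contraction (c c' : R) (y1 y2 : R -> R) : 1 < c -> 1 < c' ->
  sol c y1 -> sol c' y2 -> forall s, 1 <= s -> (y1 s - y2 s) ^+ 2 <= (c - c') ^+ 2.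
Proof.
move=> c1 c'1 h1 h2; have [y11 cy1 dy1] := h1; have [y21 cy2 dy2] := h2.
pose D s := (y1 s - y2 s) ^+ 2.
have DD (x : R) : 1 < x -> is_derive x 1 D
    ((2%:R * (y1 x - y2 x) ^+ 1) *: (H (y1 x) / (C * x) - H (y2 x) / (C * x))).
  move=> x1.
  have d1 : is_derive x 1 (fun s => y1 s - y2 s) (H (y1 x) / (C * x) - H (y2 x) / (C * x)).
    exact: (@is_deriveB _ _ _ y1 y2 x 1 _ _ (dy1 x x1) (dy2 x x1)).
  have := is_deriveM d1 d1; move=> [DD1 E]; split.
    by apply: (eq_ind _ (fun F => derivable F x 1) DD1); apply/funext => t; rewrite /D expr2.
  have -> : D = (fun s => y1 s - y2 s) * (fun s => y1 s - y2 s).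
    by apply/funext => t; rewrite /D expr2.
  by rewrite E /GRing.scale /= expr1; ring.
move=> s s1; rewrite -y11 -y21 -/(D s) -/(D 1).
apply: (@ler0_derive1_nincry R D 1) => //.
- by move=> x; rewrite in_itv /= andbT => x1; case: (DD x x1).
- move=> x; rewrite in_itv /= andbT => x1; rewrite derive1E; have [_ ->] := DD x x1.
  have u1 := above1 c1 h1 (ltW x1); have v1 := above1 c'1 h2 (ltW x1).
  have := Hprod (ltW u1) (ltW v1) => hp.
  have -> : (2%:R * (y1 x - y2 x) ^+ 1) *: (H (y1 x) / (C * x) - H (y2 x) / (C * x)) =
     (2 * ((y1 x - y2 x) * (H (y1 x) - H (y2 x)))) / (C * x).
    by rewrite /GRing.scale /= expr1; field; rewrite !gt_eqF //; lra.
  apply: mulr_le0_ge0; first by lra.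
  by rewrite invr_ge0; apply: ltW; apply: mulr_gt0 => //; lra.
- have -> : D = (fun s => y1 s - y2 s) * (fun s => y1 s - y2 s).
    by apply/funext => t; rewrite /D expr2.
  have cd : {within `[1, +oo[, continuous (fun s => y1 s - y2 s)}.
    move=> x; apply: (@continuousB R R (subspace _) y1 y2); [exact: cy1 | exact: cy2].
  move=> x; apply: (@continuousM R (subspace _) (fun s => y1 s - y2 s) (fun s => y1 s - y2 s)).
  exact: cd. exact: cd.
Qed.

Lemma sol_unique (c : R) (y1 y2 : R -> R) : 1 < c ->
  sol c y1 -> sol c y2 -> forall s, 1 <= s -> y1 s = y2 s.
Proof.
move=> c1 h1 h2 s s1; have := contraction c1 c1 h1 h2 s1.
rewrite subrr expr0n /= => h; apply/eqP; rewrite -subr_eq0 -sqrf_eq0.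
by apply/eqP; apply: le_anti; rewrite h sqr_ge0.
Qed.

Lemma sol_lower (c : R) (y : R -> R) : 1 < c -> sol c y ->
  forall s, 1 <= s -> c * expR (K / C * (1 - s)) <= y s.
Proof.
move=> c1 hy; have [y1 cy dy] := hy.
set k := K / C.
pose z s := (y s - 0) * expR (k * s).
have Dz (x : R) : 1 < x -> is_derive x 1 z
    (expR (k * x) * (H (y x) / (C * x) + k * (y x - 0))).
  by move=> x1; apply: deriv_zexp; apply: dy.
have zmono : forall s s', 1 <= s -> s <= s' -> z s <= z s'.
  apply: ger0_derive1_ndecry.
  - by move=> x; rewrite in_itv /= andbT => x1; case: (Dz x x1).
  - move=> x; rewrite in_itv /= andbT => x1; rewrite derive1E; have [_ ->] := Dz x x1.
    apply: mulr_ge0; first exact: expR_ge0.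
    have yx := above1 c1 hy (ltW x1).
    have hl := Hlow (ltW yx).
    have E : H (y x) / (C * x) + k * (y x - 0) = (H (y x) + K * y x * x) / (C * x).
      by rewrite /k; field; rewrite !gt_eqF //; lra.
    have Cx : 0 <= C * x by apply: ltW; apply: mulr_gt0 => //; apply: lt_trans x1.
    rewrite E; apply: divr_ge0 => //.
    have h5 : K * y x * 1 <= K * y x * x.
      by rewrite ler_wpM2l ?ltW // mulr_gt0 //; apply: lt_trans yx.
    lra.
  - exact: cont_zexp.
move=> s s1; have := zmono 1 s (lexx 1) s1; rewrite /z y1 !subr0 => h.
rewrite mulrBr mulr1 expRB mulrA ler_pdivrMr ?expR_gt0 //.
by rewrite mulr1 in h.
Qed.

Lemma is_derive_scal (k x : R) : is_derive x 1 (fun s : R => k * s) k.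
Proof.
have := @is_deriveZ _ _ _ id k x 1 1 (is_derive_id _ _).
by rewrite /GRing.scale /= mulr1.
Qed.

Lemma comp_scal (v : R -> R) (k x dv : R) : is_derive (k * x) 1 v dv ->
  is_derive x 1 (fun r => v (k * r)) (dv * k).
Proof.
move=> Dv; exact: (@is_derive1_comp _ v (fun s => k * s) x dv k Dv (is_derive_scal k x)).
Qed.

Lemma mulr_cst_derive (f : R -> R) (x df k : R) : is_derive x 1 f df ->
  is_derive x 1 (fun y => f y * k) (df * k).
Proof.
move=> Df; have := is_deriveM Df (is_derive_cst k x 1).
move=> [D E]; split => //; rewrite E /GRing.scale /=; ring.
Qed.

Lemma near_itv (a b x : R) : a < x -> x < b -> \forall t \near x, a < t /\ t < b.
Proof.
move=> ax xb; apply/nbhs_ballP; exists (Num.min (x - a) (b - x)).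
  by rewrite /= lt_min !subr_gt0 ax xb.
move=> t; rewrite /ball /= lt_min => /andP [h1 h2].
move: h1 h2; rewrite !ltr_distlC => /andP [h1 h2] /andP [h3 h4]; split; lra.
Qed.

Lemma deriv_cont (v : R -> R) (t dv : R) : is_derive t 1 v dv -> {for t, continuous v}.
Proof. by move=> [D _]; apply: differentiable_continuous; rewrite -derivable1_diffP. Qed.

Section Flow.
Variable W : R -> R -> R.
Hypothesis hW : forall c, 1 < c -> sol c (W c).

Lemma sol_deriv (c s : R) : 1 < c -> 1 <= s ->
  is_derive c 1 (fun c' => W c' s) (H (W c s) / H c).
Proof.
move=> c1 s1.
set u := W c; have hu : sol c u := hW c1; have [u1 _ _] := hu.
have u2 : u 2 < c by rewrite -[X in _ < X]u1; apply: (sol_decr c1 hu (lexx 1)); lra.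
have u21 : 1 < u 2 by apply: (above1 c1 hu); lra.
set cc := c + (c - u 2) / 2.
have ccc : c < cc by rewrite /cc; lra.
have cc1 : 1 < cc by lra.
set v := W cc; have hv : sol cc v := hW cc1; have [v1 cv dv] := hv.
have v2 : v 2 < c.
  have := contraction cc1 c1 hv hu (s := 2); rewrite -/u -/v => /(_ ltac:(lra)) h.
  have : v 2 - u 2 <= cc - c by nra.
  rewrite /cc; lra.
have v21 : 1 < v 2 by apply: (above1 cc1 hv); lra.
have cv12 : {within `[1, 2], continuous v} by apply: cont_sub.
pose tau (c' : R) := xget 1 [set t | 1 <= t <= 2 /\ v t = c'].
have tauP c' : v 2 <= c' <= cc -> (1 <= tau c' <= 2) /\ v (tau c') = c'.
  move=> hc'; apply: (xgetPex 1 (P := [set t | 1 <= t <= 2 /\ v t = c'])).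
  have [|t tI vt] := @IVT R v 1 2 c' ltac:(lra) cv12.
    by rewrite v1 min_r ?max_l //; lra.
  by exists t; split => //; move: tI; rewrite in_itv /=.
have vinj t t' : 1 <= t <= 2 -> 1 <= t' <= 2 -> v t = v t' -> t = t'.
  move=> /andP [ht1 ht2] /andP [ht'1 ht'2] E.
  case: (ltgtP t t') => // h.
    by have := sol_decr cc1 hv ht1 h; rewrite E ltxx.
  by have := sol_decr cc1 hv ht'1 h; rewrite E ltxx.
have tauK t : 1 <= t <= 2 -> tau (v t) = t.
  move=> /andP [ht1 ht2].
  have h1 : v 2 <= v t by apply: (sol_nincr cc1 hv).
  have h2 : v t <= cc by rewrite -v1; apply: (sol_nincr cc1 hv).
  have [tI vt] := tauP (v t) ltac:(lra).
  by apply: vinj => //; rewrite ht1 ht2.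
have [t0I vt0] := tauP c ltac:(lra).
set t0 := tau c in t0I vt0 *.
have t01 : 1 < t0.
  rewrite lt_neqAle; case/andP: t0I => -> _; rewrite andbT.
  by apply/eqP => E; move: vt0; rewrite -E v1; lra.
have t02 : t0 < 2.
  rewrite lt_neqAle; case/andP: t0I => _ ->; rewrite andbT.
  by apply/eqP => E; move: vt0; rewrite E; lra.
have Hc : H c < 0 := Hneg c1.
have Dv : is_derive t0 1 v (H c / (C * t0)) by rewrite -[in H c]vt0; apply: dv.
have Hc0 : H c / (C * t0) != 0.
  apply: mulf_neq0; first by rewrite lt_eqF.
  by rewrite invr_eq0 mulf_neq0 // gt_eqF //; lra.
have Dtau : is_derive c 1 tau ((H c / (C * t0))^-1).
  have := @is_derive_inverse R v tau _ t0 _ _ Dv Hc0; rewrite vt0; apply.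
    near=> t; apply: tauK; near: t.
    by apply: filterS (near_itv t01 t02) => t [h1 h2]; rewrite !ltW.
  near=> t; apply: (@deriv_cont v t (H (v t) / (C * t))); apply: dv.
  by near: t; apply: filterS (near_itv t01 t02) => t [].
have rep c' : v 2 < c' < cc -> W c' s = v (tau c' * s).
  move=> /andP [h1 h2].
  have [tI vt] := tauP c' ltac:(lra).
  have t'1 : 1 < tau c'.
    rewrite lt_neqAle; case/andP: tI => -> _; rewrite andbT.
    by apply/eqP => E; move: vt; rewrite -E v1; lra.
  have c'1 : 1 < c' by lra.
  set t' := tau c' in tI vt t'1 *.
  have Dy (r : R) : 1 <= r -> is_derive r 1 (fun r => v (t' * r)) (H (v (t' * r)) / (C * (t' * r)) * t').
    move=> r1; apply: comp_scal; apply: dv; nra.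
  have hy : sol c' (fun r => v (t' * r)).
    split.
    - by rewrite /= mulr1.
    - apply: continuous_in_subspaceT => r; rewrite in_setE /= in_itv /= andbT => r1.
      exact: (deriv_cont (Dy r r1)).
    - move=> r r1; have := Dy r (ltW r1).
      have -> : H (v (t' * r)) / (C * (t' * r)) * t' = H (v (t' * r)) / (C * r).
        by field; rewrite !gt_eqF //; lra.
      by [].
  exact: (sol_unique c'1 (hW c'1) hy s1).
have Eloc : \forall c' \near c, v (tau c' * s) = W c' s.
  apply: filterS (near_itv v2 ccc) => c' [h1 h2]; symmetry; apply: rep; lra.
apply: near_eq_is_derive Eloc _.
have Dg : is_derive c 1 (fun c' => tau c' * s) ((H c / (C * t0))^-1 * s).
  exact: mulr_cst_derive.
have t0s : 1 < t0 * s by nra.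
have Dvs : is_derive (tau c * s) 1 v (H (v (t0 * s)) / (C * (t0 * s))) by apply: dv.
have := @is_derive1_comp R v (fun c' => tau c' * s) c _ _ Dvs Dg.
have vE : v (t0 * s) = u s by rewrite -(rep c) ?v2 ?ccc.
rewrite vE => D.
have -> : H (u s) / H c = H (u s) / (C * (t0 * s)) * ((H c / (C * t0))^-1 * s).
  by field; rewrite (lt_eqF Hc) !gt_eqF //; lra.
exact: D.
Unshelve. all: by end_near.
Qed.

Lemma ode_main (s : R) : 1 <= s ->
  (forall c2 : R, 1 < c2 ->
     derivable (fun c => W c s) c2 1 /\ 0 < derive1 (fun c => W c s) c2 <= 1) /\
  (fun c => W c s) @ +oo --> +oo.
Proof.
move=> s1; split.
  move=> c c1; have [D E] := sol_deriv c1 s1; split => //.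
  rewrite derive1E E.
  have hu := hW c1; have us1 := above1 c1 hu s1; have usc := sol_le c1 hu s1.
  have Hus := Hneg us1; have Hc := Hneg c1; have Hl := Hle (ltW us1) usc.
  by rewrite ltr_ndivlMr // mul0r Hus /= ler_ndivrMr // mul1r.
apply/cvgryPge => A.
set beta := expR (K / C * (1 - s)).
have b0 : 0 < beta by apply: expR_gt0.
near=> c.
have c1 : 1 < c by near: c; apply: nbhs_pinfty_gt; rewrite num_real.
have cA : A / beta <= c by near: c; apply: nbhs_pinfty_ge; rewrite num_real.
apply: le_trans (sol_lower c1 (hW c1) s1).
by rewrite -ler_pdivrMr.
Unshelve. all: by end_near.
Qed.
End Flow.
End ODE.

Theorem lemma2p5 (R : realType) (n : nat) (G : set 'rV[R]_n.+1)
  (f : 'rV[R]_n.+1 -> R) (a : 'rV[R]_n.+1) (g : R -> R) (delta : R)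
  (W : R -> R -> R) :
  (* Gamma: proper open convex cone, positive cone <= Gamma <= {sum > 0} *)
  open_convex_cone G -> G <> setT ->
  (forall x : 'rV[R]_n.+1, (forall i, 0 < x 0 i) -> G x) ->
  (forall x : 'rV[R]_n.+1, G x -> 0 < \sum_i x 0 i) ->
  (* f smooth, symmetric, strictly increasing in each variable, < 1 at the boundary *)
  smooth_on G f -> symmetric_on G f ->
  (forall x i, G x -> 0 < pderiv f i x) ->
  (forall x0, bdry G x0 -> limsup_lt G f x0 1) ->
  (* A = diag(a_1, ..., a_n) in calA with 0 < a_1 <= ... <= a_n *)
  calA f (diag_mx a) ->
  0 < a 0 ord0 -> (forall i j : 'I_n.+1, (i <= j)%N -> a 0 i <= a 0 j) ->
  (* g(w): (g(w), a_2 w, ..., a_n w) in Gamma and f of it equals 1, w >= 1 *)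
  (forall w : R, 1 <= w ->
     G (\row_i (if i == ord0 then g w else a 0 i * w)) /\
     f (\row_i (if i == ord0 then g w else a 0 i * w)) = 1) ->
  0 <= delta ->
  (* W c2 = w_{c2,delta}: the solution of the ODE on [1, +oo) with w(1) = c2 *)
  (forall c2 : R, 1 < c2 ->
     [/\ W c2 1 = c2,
         {within `[1, +oo[, continuous (W c2)} &
         forall s : R, 1 < s -> is_derive s 1 (W c2)
           ((g (W c2 s) - a 0 ord0 * W c2 s) / ((2 * a 0 ord_max + delta) * s))]) ->
  forall s : R, 1 <= s ->
    (forall c2 : R, 1 < c2 ->
       derivable (fun c => W c s) c2 1 /\
       0 < derive1 (fun c => W c s) c2 <= 1) /\
    (fun c => W c s) @ +oo --> +oo.

Proof.
move=> hG hGT hpos hsum hsm hsym hpd hbd hA a0 amono hg d0 hW s s1.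
have Ga : G a by apply: (Ga hpos a0 amono).
have fa1 : f a = 1.
  case: hA => _ [a' ha' [fa' _]].
  have [sg E] := eig_perm ha'; rewrite E in fa'.
  by have [_ <-] := hsym sg a Ga.
have [L [L0 HL]] := Hlin hG hpos hsum hsm hpd fa1 a0 amono hg.
have C0 : 0 < 2 * a 0 ord_max + delta.
  have := apos a0 amono ord_max; lra.
apply: (@ode_main R (fun w => g w - a 0 ord0 * w) (2 * a 0 ord_max + delta) L
   (\sum_i a 0 i) C0 L0 (Ksum_pos a0 amono)) => //.
- by rewrite /= (g1 hG hpos hsm hpd fa1 a0 amono hg) mulr1 subrr.
- by move=> x y x1 xy; apply: (Hdec hG hpos hsm hpd a0 amono hg).
- by move=> w w1 /=; apply: ltW; exact: (sum_bound hsum hg w1).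
Qed.
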